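(* Let $\mathcal{V}$ be a set of $n\ge 2$ vertices, let $\mathcal{C}$ be a fixed partition of $\mathcal{V}$ into communities, and let $Q_a(\mathcal{C})$ denote, for an attributed graph $G$ on vertex set $\mathcal{V}$, the modularity of $\mathcal{C}$ in the auxiliary graph $G_a$ of $G$ (defined in the context). Then every attributed graph $G$ on $\mathcal{V}$ satisfies $$LS_{Q_a(\mathcal{C})}(G)=\max_{G'\sim_{at}G}\bigl|Q_a(\mathcal{C})(G)-Q_a(\mathcal{C})(G')\bigr|\le \frac{60}{n}.$$
   Context: An attributed graph is a triple $G=(\mathcal{V},\mathcal{E},X)$ with $\mathcal{V}=\{v_1,\dots,v_n\}$, $\mathcal{E}$ a set of undirected edges, and $X$ a binary $n\times k$ matrix whose $i$-th row $\tau(v_i)\in\{0,1\}^k$ is the attribute vector of $v_i$. Two attributed graphs $G=(\mathcal{V},\mathcal{E},X)$ and $G'=(\mathcal{V},\mathcal{E}',X')$ on the same vertex set are neighbouring, $G\sim_{at}G'$, iff either $|\mathcal{E}\,\triangle\,\mathcal{E}'|=1$ (and the attributes coincide), or they have the same edges and differ in the attribute vector of exactly one vertex. For a graph $H$ with $m\ge1$ edges and a partition $\mathcal{C}$ of its vertices, the modularity is $\sum_{C\in\mathcal{C}}\bigl(\frac{\ell_C}{m}-(\frac{d_C}{2m})^2\bigr)$, where $\ell_C$ is the number of edges with both ends in $C$ and $d_C$ the sum of degrees of the vertices of $C$. The auxiliary graph $G_a$ of an attributed graph $G$ has vertex set $\mathcal{V}$ and its edges are the $\lceil n(n-1)/20\rceil$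 pairs of distinct vertices whose attribute vectors have the largest cosine similarity (ties broken by a fixed rule). The local sensitivity $LS_q(G)$ of a real-valued query $q$ at $G$ is $\max_{G'\sim_{at}G}|q(G)-q(G')|$. *)

(* Defs.v *)
From HB Require Import structures.
From mathcomp Require Import all_boot all_order all_algebra.
Set Implicit Arguments. Unset Strict Implicit. Unset Printing Implicit Defensive.
Import Order.TTheory GRing.Theory Num.Theory.
Local Open Scope ring_scope.

(* Vertex set V = 'I_n.  An attribute vector is a {ffun 'I_k -> bool}.
   An attributed graph is a pair (edge set, attribute map); an undirected
   edge is a 2-element subset of 'I_n. *)
Definition attr_vec (k : nat) := {ffun 'I_k -> bool}.
Definition attr_graph (n k : nat) :=
  ({set {set 'I_n}} * {ffun 'I_n -> attr_vec k})%type.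

Definition ag_edges n k (G : attr_graph n k) : {set {set 'I_n}} := G.1.
Definition ag_attr n k (G : attr_graph n k) : {ffun 'I_n -> attr_vec k} := G.2.

Definition all_pairs (n : nat) : {set {set 'I_n}} := [set e : {set 'I_n} | #|e| == 2%N].

Definition simple_edges n (E : {set {set 'I_n}}) : bool := E \subset all_pairs n.
Definition wf_ag n k (G : attr_graph n k) : bool := simple_edges (ag_edges G).

Definition sym_diff (T : finType) (A B : {set T}) : {set T} := (A :\: B) :|: (B :\: A).
Definition nbr_at n k (G G' : attr_graph n k) : bool :=
  ((#|sym_diff (ag_edges G) (ag_edges G')| == 1%N) && (ag_attr G == ag_attr G'))
  || ((ag_edges G == ag_edges G')
      && (#|[set v | ag_attr G v != ag_attr G' v]| == 1%N)).

Definition degree n (E : {set {set 'I_n}}) (v : 'I_n) : nat :=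
  #|[set e in E | v \in e]|.
Definition modularity (R : realFieldType) n (E : {set {set 'I_n}})
    (P : {set {set 'I_n}}) : R :=
  let m : R := (#|E|)%:R in
  \sum_(C in P)
     ( (#|[set e in E | e \subset C]|)%:R / m
       - ((\sum_(v in C) degree E v)%:R / (2 * m)) ^+ 2 ).

(* cosine similarity of binary vectors: <a,b> / (||a|| ||b||);
   convention: 0 if one vector is zero (MathComp's x / 0 = 0). *)
Definition ones k (a : attr_vec k) : nat := #|[set i | a i]|.
Definition dotb k (a b : attr_vec k) : nat := #|[set i | a i && b i]|.
Definition cos_sim (R : rcfType) k (a b : attr_vec k) : R :=
  (dotb a b)%:R / (Num.sqrt (ones a)%:R * Num.sqrt (ones b)%:R).

Definition pair_sim (R : rcfType) n k (X : {ffun 'I_n -> attr_vec k})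
    (e : {set 'I_n}) : R :=
  match enum e with
  | [:: u; v] => cos_sim R (X u) (X v)
  | _ => 0
  end.

(* number of auxiliary edges: ceil(n(n-1)/20) *)
Definition n_aux (n : nat) : nat := ((n * (n - 1) + 19) %/ 20)%N.

(* Auxiliary graph G_a: the n_aux n pairs of largest cosine similarity, ties
   broken by a fixed rule given by an injective ranking [tb] of the pairs
   (smaller rank wins ties). *)
Definition beats (R : rcfType) n k (tb : {set 'I_n} -> nat)
    (X : {ffun 'I_n -> attr_vec k}) (f e : {set 'I_n}) : bool :=
  (pair_sim R X e < pair_sim R X f)
  || ((pair_sim R X f == pair_sim R X e) && (tb f < tb e)%N).
Definition aux_edges (R : rcfType) n k (tb : {set 'I_n} -> nat)
    (G : attr_graph n k) : {set {set 'I_n}} :=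
  [set e in all_pairs n |
     (#|[set f in all_pairs n | beats R tb (ag_attr G) f e]| < n_aux n)%N].

Definition Q_aux (R : rcfType) n k (tb : {set 'I_n} -> nat)
    (P : {set {set 'I_n}}) (G : attr_graph n k) : R :=
  modularity R (aux_edges R tb G) P.

Definition local_sens (R : realDomainType) n k (q : attr_graph n k -> R)
    (G : attr_graph n k) : R :=
  \big[Num.max/0]_(G' : attr_graph n k | wf_ag G' && nbr_at G G') `|q G - q G'|.

(* Main.v *)
Require Import Defs.
From HB Require Import structures.
From mathcomp Require Import all_boot all_order all_algebra zify ring lra.
Import Order.TTheory GRing.Theory Num.Theory.
Local Open Scope ring_scope.
Set Implicit Arguments. Unset Strict Implicit.
Section Beats.
Variables (R : rcfType) (n k : nat) (tb : {set 'I_n} -> nat)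
  (X : {ffun 'I_n -> attr_vec k}).
Variable S : {set {set 'I_n}}.
Hypothesis tbi : {in S &, injective tb}.
Local Notation b := (beats R tb X).

Lemma b_irr e : b e e = false.
Proof. by rewrite /beats ltxx eqxx ltnn. Qed.

Lemma b_asym e f : b e f -> b f e = false.
Proof.
rewrite /beats; case: (ltgtP (pair_sim R X e) (pair_sim R X f)) => //=.
by move=> _ h; rewrite ltnNge (ltnW h).
Qed.

Lemma b_trans e f g : b e f -> b f g -> b e g.
Proof.
rewrite /beats => /orP[h1|/andP[/eqP h1 h2]] /orP[h3|/andP[/eqP h3 h4]].
- by rewrite (lt_trans h3 h1).
- by rewrite -h3 h1.
- by rewrite h1 h3.
- by rewrite h1 h3 eqxx /=; apply/orP; right; lia.
Qed.

Lemma b_total e f : e \in S -> f \in S -> e != f -> b e f || b f e.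
Proof.
move=> eS fS nef; rewrite /beats.
case: (ltgtP (pair_sim R X e) (pair_sim R X f)) => //= _.
have : tb e != tb f.
  by apply: contra nef => /eqP h; apply/eqP; apply: tbi.
by rewrite neq_ltn.
Qed.

Definition rank e := #|[set f in S | b f e]|.

Lemma rank_lt e f : f \in S -> b f e -> (rank f < rank e)%N.
Proof.
move=> fS bfe; apply: proper_card; apply/properP; split.
  by apply/subsetP => g; rewrite !inE => /andP[-> /b_trans]; apply.
by exists f; rewrite inE ?fS ?bfe ?b_irr ?andbF.
Qed.

Lemma card_sel m : (m <= #|S|)%N -> #|[set e in S | rank e < m]%N| = m.
Proof.
move=> mS; set sel := [set e in S | _]; apply/eqP; rewrite eqn_leq; apply/andP; split.
  case: (set_0Vmem sel) => [->|[e0 e0s]]; first by rewrite cards0.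
  case: (arg_maxnP rank e0s) => e es maxe.
  have {}es : e \in sel := es.
  have sub : sel :\ e \subset [set f in S | b f e].
    apply/subsetP => f; rewrite !inE => /andP[nfe /andP[fS fm]].
    rewrite fS /=; move: es; rewrite inE => /andP[eS em].
    case/orP: (b_total fS eS nfe) => // bef.
    have := rank_lt eS bef; have fsel : f \in sel by rewrite /sel inE fS fm.
    have := maxe f fsel; rewrite /geq; lia.
  move: es; rewrite (cardsD1 e) => es; rewrite es.
  have := subset_leq_card sub; move: es; rewrite inE => /andP[_]; rewrite /rank /nat_of_bool add1n => h1 h2; exact: leq_ltn_trans h2 h1.
rewrite leqNgt; apply/negP => small.
have : (0 < #|S :\: sel|)%N.
  have := cardsID sel S; have : (#|S :&: sel| <= #|sel|)%N by apply: subset_leq_card; apply: subsetIr.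
  lia.
case/card_gt0P => e0 e0s.
case: (arg_minnP rank e0s) => e es mine.
have {es} : e \in S :\: sel := es.
rewrite inE => /andP[ensel eS].
have sub : [set f in S | b f e] \subset sel.
  apply/subsetP => f; rewrite !inE => /andP[fS bfe]; apply/negPn/negP => fns.
  have fs : f \in S :\: sel by rewrite in_setD fS andbT /sel inE.
  have := mine f fs; have := rank_lt fS bfe; lia.
move: ensel; rewrite inE eS /=; have := subset_leq_card sub; rewrite -/(rank e); lia.
Qed.
End Beats.
Section Mod.
Variables (R : rcfType) (n : nat) (P : {set {set 'I_n}}).
Hypothesis partP : partition P [set: 'I_n].

Definition Lc (E : {set {set 'I_n}}) (C : {set 'I_n}) := #|[set e in E | e \subset C]|.
Definition Dc (E : {set {set 'I_n}}) (C : {set 'I_n}) := (\sum_(v in C) degree E v)%N.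

Lemma mod_eq E : modularity R E P =
  (\sum_(C in P) Lc E C)%N%:R / #|E|%:R
  - (\sum_(C in P) (Dc E C) ^ 2)%N%:R / (2 * #|E|%:R) ^+ 2.
Proof.
rewrite /modularity sumrB -mulr_suml natr_sum; congr (_ - _).
rewrite (eq_bigr (fun C => (Dc E C ^ 2)%N%:R / (2 * #|E|%:R) ^+ 2)).
  by rewrite -mulr_suml natr_sum.
by move=> C _; rewrite expr_div_n natrX.
Qed.

Lemma sum_deg (A : {set {set 'I_n}}) : A \subset all_pairs n -> (\sum_v degree A v = 2 * #|A|)%N.
Proof.
move=> sA.
transitivity (\sum_v \sum_(e in A) (v \in e : nat))%N.
  apply: eq_bigr => v _; rewrite /degree -sum1dep_card big_mkcondr /=.
  by apply: eq_bigr => e _; case: (v \in e).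
rewrite exchange_big /= mulnC -sum_nat_const; apply: eq_big => // e eA.
have := subsetP sA e eA; rewrite inE => /eqP <-.
rewrite -sum1_card [in RHS]big_mkcond /=; apply: eq_bigr => v _; by case: (v \in e).
Qed.

Lemma part_sum (f : 'I_n -> nat) : (\sum_(C in P) \sum_(v in C) f v = \sum_v f v)%N.
Proof.
rewrite -(@set_partition_big _ _ _ _ P _ f partP); apply: eq_bigl => v; by rewrite inE.
Qed.

Lemma Lc_split E E' C : (Lc E C <= Lc E' C + Lc (E :\: E') C)%N.
Proof.
rewrite /Lc; apply: leq_trans (leq_card_setU _ _); apply: subset_leq_card.
apply/subsetP => e; rewrite !inE; by case: (e \in E'); case: (e \in E); case: (e \subset C).
Qed.

Lemma sumL_le (A : {set {set 'I_n}}) : A \subset all_pairs n -> (\sum_(C in P) Lc A C <= #|A|)%N.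
Proof.
move=> sA; case/and3P: partP => _ tI _.
have -> : (\sum_(C in P) Lc A C = \sum_(C in P) \sum_(e in A) (e \subset C : nat))%N.
  apply: eq_bigr => C _; rewrite /Lc -sum1dep_card big_mkcondr /=.
  by apply: eq_bigr => e _; case: (e \subset C).
rewrite exchange_big /= -sum1_card; apply: leq_sum => e eA.
have := subsetP sA e eA; rewrite inE => /eqP e2.
have : (0 < #|e|)%N by rewrite e2.
case/card_gt0P => x xe.
have -> : (\sum_(C in P) (e \subset C : nat) = #|[set C in P | e \subset C]|)%N.
  rewrite -sum1dep_card big_mkcondr /=.
  by apply: eq_bigr => C _; case: (e \subset C).
rewrite -(cards1 (pblock P x)); apply: subset_leq_card; apply/subsetP => C.
rewrite !inE => /andP[CP eC]; apply/eqP; symmetry; apply: def_pblock => //.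
exact: (subsetP eC).
Qed.


Lemma degree_split (E E' : {set {set 'I_n}}) v :
  degree E v = (degree (E :&: E') v + degree (E :\: E') v)%N.
Proof.
rewrite /degree -(cardsID E' [set e in E | v \in e]); congr (_ + _)%N;
  apply: eq_card => e; rewrite !inE;
  by case: (e \in E'); case: (e \in E); case: (v \in e).
Qed.

Lemma Dc_split (E E' : {set {set 'I_n}}) C :
  Dc E C = (Dc (E :&: E') C + Dc (E :\: E') C)%N.
Proof. by rewrite /Dc -big_split; apply: eq_bigr => v _; apply: degree_split. Qed.

Lemma Dc_le (E : {set {set 'I_n}}) C : E \subset all_pairs n -> C \in P ->
  (Dc E C <= 2 * #|E|)%N.
Proof.
move=> sE CP; rewrite -sum_deg // -part_sum (bigD1 C) //=; exact: leq_addr.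
Qed.

Lemma sumD_le (E E' : {set {set 'I_n}}) : E \subset all_pairs n ->
  E' \subset all_pairs n -> #|E| = #|E'| ->
  (\sum_(C in P) Dc E C ^ 2 <= \sum_(C in P) Dc E' C ^ 2 + 8 * #|E| * #|E :\: E'|)%N.
Proof.
move=> sE sE' cEE'.
have sD : (E :\: E') \subset all_pairs n.
  by apply: subset_trans sE; apply: subsetDl.
have -> : (8 * #|E| * #|E :\: E'| = \sum_(C in P) 4 * #|E| * Dc (E :\: E') C)%N.
  rewrite -big_distrr /= /Dc part_sum sum_deg //; move: (#|E|) (#|E :\: E'|) => a b; lia.
rewrite -big_split /=; apply: leq_sum => C CP.
have h1 := Dc_le sE CP; have h2 := Dc_le sE' CP.
move: h1 h2; rewrite (Dc_split E E' C) (Dc_split E' E C) setIC cEE'.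
set c := Dc _ C; set r := Dc _ C; set s := Dc _ C; nia.
Qed.

Lemma sumL_le2 (E E' : {set {set 'I_n}}) : E \subset all_pairs n ->
  (\sum_(C in P) Lc E C <= \sum_(C in P) Lc E' C + #|E :\: E'|)%N.
Proof.
move=> sE.
have sD : (E :\: E') \subset all_pairs n.
  by apply: subset_trans sE; apply: subsetDl.
apply: leq_trans (_ : \sum_(C in P) (Lc E' C + Lc (E :\: E') C) <= _)%N.
  by apply: leq_sum => C _; apply: Lc_split.
by rewrite big_split /= leq_add2l sumL_le.
Qed.

Lemma cardD_sym (E E' : {set {set 'I_n}}) : #|E| = #|E'| -> #|E' :\: E| = #|E :\: E'|.
Proof.
move=> h; have := cardsID E' E; have := cardsID E E'; rewrite setIC; clear -h; lia.
Qed.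

Lemma mod_diff (E E' : {set {set 'I_n}}) : E \subset all_pairs n ->
  E' \subset all_pairs n -> #|E| = #|E'| -> (0 < #|E|)%N ->
  `|modularity R E P - modularity R E' P| <= (3 * #|E :\: E'|)%N%:R / #|E|%:R.
Proof.
move=> sE sE' cE m0.
have hl1 := sumL_le2 E' sE; have hl2 := sumL_le2 E sE'.
have hd1 := sumD_le sE sE' cE; have hd2 := sumD_le sE' sE (esym cE).
rewrite cardD_sym // in hl2 hd2. rewrite -cE in hd2.
rewrite !mod_eq -cE.
move: hl1 hl2 hd1 hd2 m0.
set L := (\sum_(C in P) Lc E C)%N; set L' := (\sum_(C in P) Lc E' C)%N.
set D := (\sum_(C in P) Dc E C ^ 2)%N; set D' := (\sum_(C in P) Dc E' C ^ 2)%N.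
set t := #|E :\: E'|; set m := #|E|.
rewrite -!(ler_nat R) => hl1 hl2 hd1 hd2 m0.
rewrite !natrD !natrM in hl1 hl2 hd1 hd2 *.
set l := L%:R in hl1 hl2 *; set l' := L'%:R in hl1 hl2 *.
set d := D%:R in hd1 hd2 *; set d' := D'%:R in hd1 hd2 *.
set tt := t%:R in hl1 hl2 hd1 hd2 *; set mm := m%:R in hd1 hd2 m0 *.
have m0' : 0 < mm by apply: lt_le_trans m0; rewrite ltr01.
have mn0 : mm != 0 by rewrite gt_eqF.
have -> : l / mm - d / (2 * mm) ^+ 2 - (l' / mm - d' / (2 * mm) ^+ 2)
   = ((l - l') * (4 * mm) - (d - d')) / (4 * mm ^+ 2) by field.
have -> : (tt + (tt + (tt + 0))) / mm = (12 * tt * mm) / (4 * mm ^+ 2) by field.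
rewrite normrM [`|_^-1|]ger0_norm; last by rewrite invr_ge0; nra.
apply: ler_wpM2r; first by rewrite invr_ge0; nra.
rewrite ler_norml; apply/andP; split; nra.
Qed.

End Mod.

Lemma ps_eq (R : rcfType) n k (X X' : {ffun 'I_n -> attr_vec k}) (e : {set 'I_n}) :
  (forall u, u \in e -> X u = X' u) -> pair_sim R X e = pair_sim R X' e.
Proof.
move=> H; have H' : forall u, u \in enum e -> X u = X' u.
  by move=> u; rewrite mem_enum; apply: H.
rewrite /pair_sim; move: H'; case: (enum e) => [|u [|w [|? ?]]] //= H'.
by rewrite !H' // !inE eqxx ?orbT.
Qed.

Lemma nb_le (n : nat) (v : 'I_n) :
  (#|[set e in all_pairs n | v \in e]| <= n - 1)%N.
Proof.
apply: leq_trans (_ : #|(fun u => [set v; u]) @: [set~ v]| <= _)%N.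
  apply: subset_leq_card; apply/subsetP => e; rewrite !inE => /andP[/cards2P[x [y [nxy ->]]]].
  rewrite !inE => /orP[/eqP vx|/eqP vy].
    by apply/imsetP; exists y; rewrite ?inE vx // eq_sym.
  apply/imsetP; exists x; first by rewrite !inE vy.
  by rewrite vy setUC.
by apply: leq_trans (leq_imset_card _ _) _; rewrite cardsC1 card_ord; lia.
Qed.

Section Main.
Variables (R : rcfType) (n k : nat) (tb : {set 'I_n} -> nat).
Hypothesis tbi : {in all_pairs n &, injective tb}.
Hypothesis n2 : (2 <= n)%N.

Lemma naux_le : (n_aux n <= #|all_pairs n|)%N.
Proof.
rewrite /all_pairs card_draws card_ord bin2 /n_aux -divn2; lia.
Qed.

Lemma aux_sub (G : attr_graph n k) : aux_edges R tb G \subset all_pairs n.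
Proof. by apply/subsetP => e; rewrite inE => /andP[]. Qed.

Lemma aux_card (G : attr_graph n k) : #|aux_edges R tb G| = n_aux n.
Proof. exact: (card_sel R (ag_attr G) tbi naux_le). Qed.

Lemma diff_le (G G' : attr_graph n k) (v : 'I_n) :
  (forall u, u != v -> ag_attr G u = ag_attr G' u) ->
  (#|aux_edges R tb G :\: aux_edges R tb G'| <= n - 1)%N.
Proof.
move=> hX; set E := aux_edges R tb G; set E' := aux_edges R tb G'.
set Vp := [set e in all_pairs n | v \in e].
have cE : #|E| = #|E'| by rewrite /E /E' !aux_card.
suff : ((E :\: E') \subset Vp) || ((E' :\: E) \subset Vp).
  case/orP => /subset_leq_card h; apply: leq_trans (nb_le v).
    exact: h.
  by rewrite -(cardD_sym cE).
case: (boolP ((E :\: E') \subset Vp)) => //= /subsetPn[e eD eV].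
apply/subsetP => f fD; apply/negPn/negP => fV.
have memE : forall (H : attr_graph n k) g, (g \in aux_edges R tb H) =
    (g \in all_pairs n) && (rank R tb (ag_attr H) (all_pairs n) g < n_aux n)%N.
  by move=> H g; rewrite /aux_edges in_set.
move: eD fD; rewrite !in_setD /E /E' !memE.
move=> /andP[eE' /andP[eS em]] /andP[fE /andP[fS fm]].
move: eE' fE; rewrite eS fS /= -!leqNgt => em' fm'.
have ve : v \notin e by apply: contra eV => ve; apply/setIdP.
have vf : v \notin f by apply: contra fV => vf; apply/setIdP.
have nef : e != f.
  by apply/eqP => ef; move: fm'; rewrite -ef; lia.
have same : forall g : {set 'I_n}, v \notin g -> pair_sim R (ag_attr G) g = pair_sim R (ag_attr G') g.
  move=> g vg; apply: ps_eq => u ug; apply: hX; apply/eqP => uv; move: vg; by rewrite -uv ug.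
have bX : beats R tb (ag_attr G) e f.
  case/orP: (b_total R (ag_attr G) tbi eS fS nef) => // bfe.
  have := rank_lt (X := ag_attr G) (S := all_pairs n) fS bfe; lia.
have bX' : beats R tb (ag_attr G') f e.
  have nfe : f != e by rewrite eq_sym.
  case/orP: (b_total R (ag_attr G') tbi fS eS nfe) => // bef.
  have := rank_lt (X := ag_attr G') (S := all_pairs n) eS bef; lia.
move: bX; rewrite /beats !same // => bX.
have h := b_asym (X := ag_attr G') (tb := tb) bX.
by rewrite h in bX'.
Qed.

End Main.

Theorem proposition1 (R : rcfType) (n k : nat) (tb : {set 'I_n} -> nat)
    (P : {set {set 'I_n}}) (G : attr_graph n k) :
  (2 <= n)%N ->
  {in all_pairs n &, injective tb} ->
  partition P [set: 'I_n] ->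
  wf_ag G ->
  local_sens (Q_aux R tb P) G <= 60 / n%:R.
Proof.
move=> n2 tbi partP _.
have n0 : 0 < (n%:R : R) by rewrite ltr0n; lia.
rewrite /local_sens; apply: (big_ind (fun x => x <= 60 / n%:R)).
- by rewrite divr_ge0 // ler0n.
- by move=> x y hx hy; rewrite ge_max hx hy.
move=> G' /andP[_]; case/orP => [/andP[_ /eqP hX] | /andP[_ /cards1P[v hv]]].
  by rewrite /Q_aux /aux_edges hX subrr normr0 divr_ge0 // ler0n.
have hX : forall u, u != v -> ag_attr G u = ag_attr G' u.
  move=> u uv; apply/eqP/negP => /negP h.
  have : u \in [set v0 | ag_attr G v0 != ag_attr G' v0] by rewrite inE.
  by rewrite hv inE (negbTE uv).
have cE := aux_card R tbi n2 G; have cE' := aux_card R tbi n2 G'.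
have hm : (0 < n_aux n)%N by rewrite /n_aux; lia.
have ht := diff_le R tbi n2 hX.
rewrite /Q_aux; apply: le_trans (mod_diff R partP (aux_sub R tb G) (aux_sub R tb G') _ _) _.
- by rewrite cE cE'.
- by rewrite cE.
rewrite cE; set t := #|_ :\: _| in ht *.
have m0 : 0 < ((n_aux n)%:R : R) by rewrite ltr0n.
rewrite ler_pdivrMr // mulrAC ler_pdivlMr // -!natrM ler_nat.
have : (n * (n - 1) <= 20 * n_aux n)%N by rewrite /n_aux; lia.
nia.
Qed.
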